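(* Let $p$ be an odd prime and let $\alpha,\beta\in\mathbb{Q}_p$. Suppose that the Browkin $p$-adic continued fraction expansions of $\alpha$ and $\beta$ have the same first $n+1$ partial quotients $b_0,b_1,\ldots,b_n$, and let $B_n$ be defined from these partial quotients by $B_{-2}=1$, $B_{-1}=0$, $B_i=b_iB_{i-1}+B_{i-2}$. Then $$\lvert \alpha-\beta\rvert_p<\frac{1}{\lvert B_n\rvert_p^2}.$$
   Context: Throughout, $p$ is an odd prime and $\lvert\cdot\rvert_p$ is the $p$-adic absolute value. Every $x\in\mathbb{Q}_p$ has a unique expansion $x=\sum_{i\ge r}a_ip^i$ with $r\in\mathbb{Z}$ and $a_i\in\{-\frac{p-1}{2},\ldots,\frac{p-1}{2}\}$; Browkin's function is $s(x)=\sum_{i=r}^{0}a_ip^i$ (so $s(x)=0$ if $r>0$). The Browkin continued fraction expansion $[b_0,b_1,\ldots]$ of $\alpha_0\in\mathbb{Q}_p$ is obtained by iterating $b_i=s(\alpha_i)$ and $\alpha_{i+1}=1/(\alpha_i-b_i)$ as long as $\alpha_i\neq b_i$; if $\alpha_i=b_i$ the expansion stops. The $b_i$ are the partial quotients. *)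

(* Defs.v *)
(* Q_p is given axiomatically as "a complete valued field in
   which Q is dense and whose absolute value restricts to |.|_p on Q", which
   characterizes Q_p up to isometric isomorphism. *)
From mathcomp Require Import all_boot all_order all_algebra.
Set Implicit Arguments. Unset Strict Implicit. Unset Printing Implicit Defensive.
Import Order.TTheory GRing.Theory Num.Theory.
Local Open Scope ring_scope.

Definition padic_val (p : nat) (q : rat) : int :=
  (logn p `|numq q|%N)%:Z - (logn p `|denq q|%N)%:Z.

Definition padic_abs (p : nat) (q : rat) : rat :=
  if q == 0 then 0 else (p%:Q) ^ (- padic_val p q).

Record is_Qp (p : nat) (K : fieldType) (abs : K -> rat) : Prop := {
  Qp_abs0 : forall x, (abs x == 0) = (x == 0);
  Qp_abs_ge0 : forall x, 0 <= abs x;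
  Qp_absM : forall x y, abs (x * y) = abs x * abs y;
  Qp_ultra : forall x y, abs (x + y) <= Num.max (abs x) (abs y);
  Qp_abs_rat : forall q : rat, abs (ratr q) = padic_abs p q;
  Qp_dense : forall (x : K) (eps : rat), 0 < eps ->
      exists q : rat, abs (x - ratr q) < eps;
  Qp_complete : forall u : nat -> K,
      (forall eps : rat, 0 < eps -> exists N, forall m n, (N <= m)%N -> (N <= n)%N ->
          abs (u m - u n) < eps) ->
      exists l : K, forall eps : rat, 0 < eps -> exists N, forall n, (N <= n)%N ->
          abs (l - u n) < eps
}.

Definition balanced_digit (p : nat) (a : int) : bool := `|a| <= ((p.-1)./2)%:Z.

Definition browkin_expansion (p : nat) (K : fieldType) (abs : K -> rat)
    (x : K) (r : int) (a : nat -> int) : Prop :=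
  (forall k, balanced_digit p (a k)) /\
  forall eps : rat, 0 < eps -> exists N0, forall N, (N0 <= N)%N ->
    abs (x - ratr (\sum_(k < N) (a k)%:~R * (p%:Q) ^ (k%:Z + r))) < eps.

(* s(x) = sum_{i=r}^{0} a_i p^i, i.e. the terms with exponent k + r <= 0 *)
Definition browkin_s_of (p : nat) (r : int) (a : nat -> int) : rat :=
  \sum_(k < `|1 - r|%N | (k%:Z + r <= 0)) (a k)%:~R * (p%:Q) ^ (k%:Z + r).

(* q = s(x) (the expansion is unique, so this relation is functional) *)
Definition browkin_s (p : nat) (K : fieldType) (abs : K -> rat) (x : K) (q : rat) : Prop :=
  exists r a, browkin_expansion p abs x r a /\ q = browkin_s_of p r a.

Definition browkin_cf_prefix (p : nat) (K : fieldType) (abs : K -> rat)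
    (x : K) (b : nat -> rat) (n : nat) : Prop :=
  exists alpha : nat -> K,
    alpha 0%N = x /\
    (forall i, (i <= n)%N -> browkin_s p abs (alpha i) (b i)) /\
    (forall i, (i < n)%N -> alpha i != ratr (b i) /\
                            alpha i.+1 = (alpha i - ratr (b i))^-1).

(* (B_{n-1}, B_n) with B_{-2} = 1, B_{-1} = 0, B_i = b_i B_{i-1} + B_{i-2} *)
Fixpoint Bpair (b : nat -> rat) (n : nat) : rat * rat :=
  match n with
  | 0 => (0, b 0%N * 0 + 1)
  | m.+1 => let: (u, v) := Bpair b m in (v, b m.+1 * v + u)
  end.

Definition Bcf (b : nat -> rat) (n : nat) : rat := (Bpair b n).2.

(* Main.v *)
Require Import Defs.
From mathcomp Require Import all_boot all_order all_algebra.
From mathcomp Require Import zify ring.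
Import Order.TTheory GRing.Theory Num.Theory.
Local Open Scope ring_scope.

Lemma abs0 {p} {K : fieldType} {abs : K -> rat} (hK : is_Qp p abs) : abs 0 = 0.
Proof. by apply/eqP; rewrite (Qp_abs0 hK). Qed.

Lemma abs1 {p} {K : fieldType} {abs : K -> rat} (hK : is_Qp p abs) : abs 1 = 1.
Proof.
have h := Qp_absM hK 1 1; rewrite mulr1 in h.
have nz : abs 1 != 0 by rewrite (Qp_abs0 hK) oner_neq0.
by apply: (mulfI nz); rewrite -h mulr1.
Qed.

Lemma absN1 {p} {K : fieldType} {abs : K -> rat} (hK : is_Qp p abs) : abs (-1) = 1.
Proof.
have h := Qp_absM hK (-1) (-1); rewrite mulrNN mulr1 (abs1 hK) in h.
have g := Qp_abs_ge0 hK (-1).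
have : (abs (-1) - 1) * (abs (-1) + 1) = 0.
  have -> : (abs (-1) - 1) * (abs (-1) + 1) = abs (-1) * abs (-1) - 1 by ring.
  by rewrite -h subrr.
move/eqP; rewrite mulf_eq0 => /orP[]; first by rewrite subr_eq0 => /eqP.
move=> /eqP e; have : 0 < abs (-1) + 1 by rewrite ltr_wpDl.
by rewrite e ltxx.
Qed.

Lemma absN {p} {K : fieldType} {abs : K -> rat} (hK : is_Qp p abs) x : abs (- x) = abs x.
Proof. by rewrite -mulN1r (Qp_absM hK) (absN1 hK) mul1r. Qed.

Lemma absB {p} {K : fieldType} {abs : K -> rat} (hK : is_Qp p abs) x y : abs (x - y) = abs (y - x).
Proof. by rewrite -(absN hK) opprB. Qed.

Lemma ultra_eq {p} {K : fieldType} {abs : K -> rat} (hK : is_Qp p abs) x y :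
  abs (x - y) < abs x -> abs y = abs x.
Proof.
move=> h; apply/eqP; rewrite eq_le; apply/andP; split.
  have := Qp_ultra hK x (y - x); rewrite addrC subrK (absB hK).
  by move/le_trans; apply; rewrite ge_max lexx ltW.
have := Qp_ultra hK y (x - y); rewrite addrC subrK.
rewrite le_max => /orP[] // /(le_lt_trans) /(_ h); by rewrite ltxx.
Qed.

Lemma absV {p} {K : fieldType} {abs : K -> rat} (hK : is_Qp p abs) x : x != 0 ->
  abs x^-1 = (abs x)^-1.
Proof.
move=> nz; have := Qp_absM hK x^-1 x; rewrite mulVf // (abs1 hK) => h.
have ax : abs x != 0 by rewrite (Qp_abs0 hK).
by apply: (mulIf ax); rewrite -h mulVf.
Qed.

Lemma absX {p} {K : fieldType} {abs : K -> rat} (hK : is_Qp p abs) x n :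
  abs (x ^+ n) = abs x ^+ n.
Proof. elim: n => [|n IH]; first by rewrite !expr0 (abs1 hK).
by rewrite !exprS (Qp_absM hK) IH. Qed.

Lemma abs_nat {p} {K : fieldType} {abs : K -> rat} (hK : is_Qp p abs) n :
  abs (n%:R) <= 1.
Proof.
elim: n => [|n IH]; first by rewrite (abs0 hK).
rewrite mulrS; apply: le_trans (Qp_ultra hK _ _) _.
by rewrite ge_max (abs1 hK) lexx IH.
Qed.

Lemma abs_int {p} {K : fieldType} {abs : K -> rat} (hK : is_Qp p abs) (z : int) :
  abs (ratr (z%:~R)) <= 1.
Proof.
rewrite ratr_int; case: z => n; first exact: abs_nat hK n.
by rewrite NegzE mulrNz (absN hK); exact: abs_nat hK n.+1.
Qed.

Lemma abs_p {p} {K : fieldType} {abs : K -> rat} (hK : is_Qp p abs) : prime p ->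
  abs (ratr (p%:Q)) = (p%:Q)^-1.
Proof.
move=> pp; rewrite (Qp_abs_rat hK) /padic_abs /padic_val.
have p0 : (p%:Q == 0) = false by apply/negbTE; rewrite intr_eq0 eqz_nat -lt0n prime_gt0.
rewrite p0 numq_int denq_int /= logn1 logn_prime // eqxx subr0.
by rewrite exprN1.
Qed.


Lemma char0 {p} {K : fieldType} {abs : K -> rat} (hK : is_Qp p abs) (pp : prime p)
  (z : int) : z != 0 -> (z%:~R : K) != 0.
Proof.
move=> nz; rewrite -(Qp_abs0 hK) -ratr_int (Qp_abs_rat hK) /padic_abs.
rewrite intr_eq0 (negbTE nz) expfz_neq0 //.
by rewrite intr_eq0 eqz_nat -lt0n prime_gt0.
Qed.

Lemma ratrB {p} {K : fieldType} {abs : K -> rat} (hK : is_Qp p abs) (pp : prime p)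
  (x y : rat) : ratr (x - y) = ratr x - ratr y :> K.
Proof.
have injZtoQ: @injective rat int intr by apply: intr_inj.
have nz_den x0: (denq x0)%:~R != 0 :> K by apply: (char0 hK pp); rewrite denq_eq0.
apply: (canLR (mulfK (nz_den _))); apply: (mulIf (nz_den x)).
rewrite mulrAC mulrBl divfK ?nz_den // mulrAC -!rmorphM.
apply: (mulIf (nz_den y)); rewrite mulrAC mulrBl divfK ?nz_den //.
rewrite -!(rmorphM, rmorphB); congr _%:~R; apply: injZtoQ.
rewrite !(rmorphM, rmorphB) /= [_ - _]lock /= -lock !numqE.
by rewrite (mulrAC y) -!mulrBl -mulrA mulrAC !mulrA.
Qed.

Lemma ratrM {p} {K : fieldType} {abs : K -> rat} (hK : is_Qp p abs) (pp : prime p)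
  (x y : rat) : ratr (x * y) = ratr x * ratr y :> K.
Proof.
have injZtoQ: @injective rat int intr by apply: intr_inj.
have nz_den x0: (denq x0)%:~R != 0 :> K by apply: (char0 hK pp); rewrite denq_eq0.
rewrite /ratr mulrC mulrAC; apply: canLR (mulKf (nz_den _)) _; rewrite !mulrA.
do 2!apply: canRL (mulfK (nz_den _)) _; rewrite -!rmorphM; congr _%:~R.
apply: injZtoQ; rewrite !rmorphM [x * y]lock /= !numqE -lock.
by rewrite -!mulrA mulrA mulrCA -!mulrA (mulrCA y).
Qed.

Lemma ratr0 {K : unitRingType} : ratr (0 : rat) = 0 :> K.
Proof. by rewrite /ratr /= mul0r. Qed.

Lemma ratr1 {K : unitRingType} : ratr (1 : rat) = 1 :> K.
Proof. by rewrite /ratr divr1. Qed.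

Lemma ratrD {p} {K : fieldType} {abs : K -> rat} (hK : is_Qp p abs) (pp : prime p)
  (x y : rat) : ratr (x + y) = ratr x + ratr y :> K.
Proof.
have h z : ratr (- z) = - ratr z :> K by rewrite -sub0r (ratrB hK pp) ratr0 sub0r.
have -> : x + y = x - (- y) by rewrite opprK.
by rewrite (ratrB hK pp) h opprK.
Qed.

Lemma ratrX {p} {K : fieldType} {abs : K -> rat} (hK : is_Qp p abs) (pp : prime p)
  (x : rat) n : ratr (x ^+ n) = ratr x ^+ n :> K.
Proof. elim: n => [|n IH]; first by rewrite !expr0 ratr1.
by rewrite !exprS (ratrM hK pp) IH. Qed.

Lemma abs_term {p} {K : fieldType} {abs : K -> rat} (hK : is_Qp p abs) (pp : prime p)
  (a e : int) : 0 < e -> abs (ratr ((a%:~R : rat) * (p%:Q) ^ e)) <= (p%:Q)^-1.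
Proof.
case: e => [[|m]|m] // _.
rewrite (ratrM hK pp) (Qp_absM hK) (ratrX hK pp) (absX hK) (abs_p hK pp).
have hp0 : 0 <= (p%:Q)^-1 by rewrite invr_ge0 ler0z.
have hp1 : (p%:Q)^-1 <= 1.
  by rewrite invf_le1 ?ltr0z ?ler1z; rewrite ?lez_nat ?ltz_nat; apply: prime_gt0.
apply: le_trans (ler_piMl _ (abs_int hK a)) _; first by rewrite exprn_ge0.
by rewrite exprS ler_piMr // exprn_ile1.
Qed.

Lemma s_lemma {p} {K : fieldType} {abs : K -> rat} (hK : is_Qp p abs) (pp : prime p)
  x q : browkin_s p abs x q -> abs (x - ratr q) < 1.
Proof.
move=> [r [a [[_ Hc] ->]]].
have [N0 HN0] := Hc 1 ltr01.
set M := `|1 - r|%N.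
set N := maxn N0 M.
have := HN0 N (leq_maxl _ _).
set S := \sum_(k < N) _ => hS.
have hNM : (M <= N)%N by rewrite leq_maxr.
have eS : S = browkin_s_of p r a +
   \sum_(k < N | ~~ (k%:Z + r <= 0)) (a k)%:~R * (p%:Q) ^ (k%:Z + r).
  rewrite /S (bigID (fun k : 'I_N => k%:Z + r <= 0)) /=; congr (_ + _).
  rewrite /browkin_s_of -(big_mkord (fun k : nat => k%:Z + r <= 0)
     (fun k : nat => (a k)%:~R * (p%:Q) ^ (k%:Z + r))).
  rewrite -(big_mkord (fun k : nat => k%:Z + r <= 0)
     (fun k : nat => (a k)%:~R * (p%:Q) ^ (k%:Z + r))).
  rewrite (big_cat_nat (leq0n M) hNM) /= [X in _ + X]big_nat_cond [X in _ + X]big1 ?addr0 //.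
  move=> k /andP[/andP[h1 h2] h3]; exfalso; move: h1 h3; rewrite /M; lia.
have hT : abs (ratr (S - browkin_s_of p r a)) <= (p%:Q)^-1.
  rewrite eS addrC addKr.
  apply: (big_ind (fun q : rat => abs (ratr q) <= (p%:Q)^-1)).
  - by rewrite ratr0 (abs0 hK) invr_ge0 ler0z.
  - move=> u v hu hv; rewrite (ratrD hK pp); apply: le_trans (Qp_ultra hK _ _) _.
    by rewrite ge_max hu hv.
  - move=> k hk; apply: abs_term hK pp _ _ _; rewrite ltNge; exact: hk.
have hp1 : (p%:Q)^-1 < 1.
  by rewrite invf_lt1 ?ltr0z ?ltr1z; rewrite ?ltz_nat; first [apply: prime_gt1 | apply: prime_gt0].
have -> : x - ratr (browkin_s_of p r a) = (x - ratr S) + ratr (S - browkin_s_of p r a).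
  by rewrite (ratrB hK pp) addrA subrK.
apply: le_lt_trans (Qp_ultra hK _ _) _.
by rewrite gt_max hS (le_lt_trans hT hp1).
Qed.

Lemma grow {p} {K : fieldType} {abs : K -> rat} (hK : is_Qp p abs) (pp : prime p)
  (b : nat -> rat) (n : nat) (al : nat -> K) :
  (forall i, (i <= n)%N -> browkin_s p abs (al i) (b i)) ->
  (forall i, (i < n)%N -> al i != ratr (b i) /\ al i.+1 = (al i - ratr (b i))^-1) ->
  forall i, (i < n)%N -> abs (al i.+1) = abs (ratr (b i.+1)) /\ 1 < abs (ratr (b i.+1)).
Proof.
move=> Hs Hst i lt_in.
have [ne eq] := Hst i lt_in.
have h1 := s_lemma hK pp _ _ (Hs i (ltnW lt_in)).
have nz : al i - ratr (b i) != 0 by rewrite subr_eq0.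
have hgt : 1 < abs (al i.+1).
  rewrite eq (absV hK _ nz) invf_gt1 //.
  by rewrite lt_neqAle (Qp_abs_ge0 hK) andbT eq_sym (Qp_abs0 hK) nz.
have h2 := s_lemma hK pp _ _ (Hs i.+1 lt_in).
have e := ultra_eq hK _ _ (lt_trans h2 hgt).
by rewrite e; split.
Qed.

Theorem lemma1 (p : nat) (hp : prime p) (hodd : odd p)
  (K : fieldType) (abs : K -> rat) (hK : is_Qp p abs)
  (alpha beta : K) (b : nat -> rat) (n : nat) :
  browkin_cf_prefix p abs alpha b n ->
  browkin_cf_prefix p abs beta b n ->
  abs (alpha - beta) < 1 / (padic_abs p (Bcf b n)) ^+ 2.
Proof.
move=> [al [al0 [Has Hast]]] [be [be0 [Hbs Hbst]]].
have Ga := grow hK hp b n al Has Hast.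
have Gb := grow hK hp b n be Hbs Hbst.
have inv : forall i, (i <= n)%N ->
  abs (al i - be i) = abs (alpha - beta) * abs (ratr (Bcf b i)) ^+ 2 /\
  abs (ratr (Bpair b i).1) < abs (ratr (Bpair b i).2).
  elim=> [|i IH] Hi.
    rewrite /Bcf /= mulr0 add0r ratr1 ratr0 (abs1 hK) (abs0 hK) expr1n mulr1 al0 be0.
    by split.
  have [IH1 IH2] := IH (ltnW Hi).
  have [ea gb] := Ga i Hi.
  have [eb _] := Gb i Hi.
  move: IH1 IH2; rewrite /Bcf /=; case: (Bpair b i) => u v /= IH1 IH2.
  have habv : abs (ratr v) < abs (ratr (b i.+1) * ratr v).
    rewrite (Qp_absM hK (ratr (b i.+1)) (ratr v)) ltr_pMl //.
    exact: le_lt_trans (Qp_abs_ge0 hK _) IH2.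
  have hB : abs (ratr (b i.+1 * v + u)) = abs (ratr (b i.+1)) * abs (ratr v).
    rewrite -(Qp_absM hK); apply: (ultra_eq hK).
    rewrite (ratrD hK hp) (ratrM hK hp) opprD addrA subrr sub0r (absN hK).
    exact: lt_trans IH2 habv.
  split; last by rewrite hB -(Qp_absM hK).
  have [na ea'] := Hast i Hi.
  have [nb eb'] := Hbst i Hi.
  have nza : al i - ratr (b i) != 0 by rewrite subr_eq0.
  have nzb : be i - ratr (b i) != 0 by rewrite subr_eq0.
  have ee : al i.+1 - be i.+1 = - (al i - be i) * al i.+1 * be i.+1.
    rewrite ea' eb'; field; by rewrite nza nzb.
  rewrite ee hB.
  have -> : abs (- (al i - be i) * al i.+1 * be i.+1) = abs (al i - be i) * abs (al i.+1) * abs (be i.+1) by rewrite !(Qp_absM hK) (absN hK).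
  rewrite ea eb IH1.
  by rewrite exprMn; ring.
have [In _] := inv n (leqnn n).
have lt1 : abs (al n - be n) < 1.
  have ha := s_lemma hK hp _ _ (Has n (leqnn n)).
  have hb := s_lemma hK hp _ _ (Hbs n (leqnn n)).
  have -> : al n - be n = (al n - ratr (b n)) + (ratr (b n) - be n) by rewrite addrA subrK.
  apply: le_lt_trans (Qp_ultra hK _ _) _.
  by rewrite gt_max ha (absB hK) hb.
have Xpos : 0 < abs (ratr (Bcf b n)).
  have [_ h] := inv n (leqnn n).
  exact: le_lt_trans (Qp_abs_ge0 hK _) h.
rewrite -(Qp_abs_rat hK) ltr_pdivlMr ?exprn_gt0 //.
by rewrite -In.
Qed.
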